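(* Let $(X,Y)$ be a pair of uncorrelated real random variables. If $X\in\mathcal{G}(\nu)$ and $|Y|\le\kappa$ almost surely for some $\nu>0$ and $\kappa>0$, then $XY\in\mathcal{G}((9/2)\kappa^2\nu)$.
   Context: A centered random variable $Y$ is sub-Gaussian with variance factor $\tau^2$, written $Y\in\mathcal{G}(\tau^2)$, if $\log\mathbb{E}[\exp(\lambda Y)]\le\lambda^2\tau^2/2$ for all $\lambda\in\mathbb{R}$ (in particular membership in $\mathcal{G}(\cdot)$ requires the variable to be centered). *)

(* Defs.v *)
From HB Require Import structures.
From mathcomp Require Import all_boot all_order all_algebra.
From mathcomp Require Import all_classical all_reals all_analysis.
Set Implicit Arguments. Unset Strict Implicit. Unset Printing Implicit Defensive.
Import Order.TTheory GRing.Theory Num.Theory.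
Local Open Scope ring_scope.

Definition centered {d} {T : measurableType d} {R : realType}
  (P : probability T R) (Y : T -> R) : Prop :=
  measurable_fun setT Y /\ Y \in Lfun P 1 /\ ('E_P[Y] = 0)%E.

(* Y \in G(tau2): Y centered and log E[exp(lambda Y)] <= lambda^2 tau2 / 2
   for every real lambda, written (equivalently, as log is increasing and
   allowing E[...] = +oo) as E[exp(lambda Y)] <= exp(lambda^2 tau2 / 2)
   in the extended reals. *)
Definition sub_gaussian {d} {T : measurableType d} {R : realType}
  (P : probability T R) (tau2 : R) (Y : T -> R) : Prop :=
  centered P Y /\
  forall lambda : R,
    ('E_P[fun w => expR (lambda * Y w)] <= (expR (lambda ^+ 2 * tau2 / 2))%:E)%E.

Definition uncorrelated {d} {T : measurableType d} {R : realType}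
  (P : probability T R) (X Y : T -> R) : Prop :=
  X \in Lfun P 1 /\ Y \in Lfun P 1 /\ (X * Y)%R \in Lfun P 1 /\
  covariance P X Y = 0%E.

(* Main.v *)
Require Import Defs.
From HB Require Import structures.
From mathcomp Require Import all_boot all_order all_algebra.
From mathcomp Require Import all_classical all_reals all_analysis.
From mathcomp Require Import lra measurable_realfun.
Import Order.TTheory GRing.Theory Num.Theory.
Local Open Scope ring_scope.

Lemma cosh_bound (R : realType) (z : R) :
  expR z - z <= (expR (2 * z) + expR (- (2 * z))) / 2.
Proof.
have h := expR_ge1Dx (- z).
rewrite expRN in h.
rewrite expRN !(expRM_natl 2).
set y := expR z in h *.
have y0 : 0 < y by apply: expR_gt0.
set t := y^-1 in h *.
rewrite -exprVn -/t.
have := sqr_ge0 (y - 1); have := sqr_ge0 (t - 1); rewrite !expr2; nra.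
Qed.

Lemma cosh_mono0 (R : realType) (a b : R) : 0 <= a -> a <= b ->
  expR a + expR (- a) <= expR b + expR (- b).
Proof.
move=> a0 ab.
rewrite !expRN.
have A1 : 1 <= expR a by rewrite -expR0 ler_expR.
have AB : expR a <= expR b by rewrite ler_expR.
set A := expR a in A1 AB *; set B := expR b in AB *.
have A0 : 0 < A by lra.
have B0 : 0 < B by lra.
have hA : A * A^-1 = 1 by rewrite mulfV // gt_eqF.
have hB : B * B^-1 = 1 by rewrite mulfV // gt_eqF.
have iA : 0 < A^-1 by rewrite invr_gt0.
have iB : 0 < B^-1 by rewrite invr_gt0.
have iA1 : A^-1 <= 1 by rewrite invr_le1 // ?unitfE ?gt_eqF.
have iB1 : B^-1 <= 1 by rewrite invr_le1 // ?unitfE ?gt_eqF //; lra.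
have e : A^-1 - B^-1 = (B - A) * (A^-1 * B^-1).
  by rewrite mulrBl mulrCA hB mulr1 mulrA hA mul1r.
have : A^-1 * B^-1 <= 1 by nra.
nra.
Qed.

Lemma cosh_mono (R : realType) (a b : R) : `|a| <= `|b| ->
  expR a + expR (- a) <= expR b + expR (- b).
Proof.
have ev : forall x : R, expR x + expR (- x) = expR `|x| + expR (- `|x|).
  move=> x; case: (lerP 0 x) => x0; first by rewrite ger0_norm.
  by rewrite ltr0_norm // opprK addrC.
move=> h; rewrite (ev a) (ev b); apply: cosh_mono0 => //.
Qed.

Lemma Lfun_of_bound d (T : measurableType d) (R : realType) (P : probability T R)
  (f : T -> R) (r : R) : measurable_fun setT f -> (forall x, 0 <= f x) ->
  ('E_P[f] <= r%:E)%E -> f \in Lfun P 1.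
Proof.
move=> mf f0 hf; apply/Lfun1_integrable; apply/integrableP; split.
  exact/measurable_realfun.measurable_EFinP.
rewrite [X in (X < _)%E](_ : _ = \int[P]_x (f x)%:E)%E; last by apply: eq_integral => x _; rewrite /comp /= ger0_norm.
rewrite unlock in hf.
apply: (le_lt_trans hf); exact: ltry.
Qed.

Theorem lemma4 (d : measure_display) (T : measurableType d) (R : realType)
  (P : probability T R) (X Y : {RV P >-> R}) (nu kappa : R) :
  0 < nu -> 0 < kappa ->
  uncorrelated P X Y ->
  sub_gaussian P nu X ->
  {ae P, forall w, `|Y w| <= kappa} ->
  sub_gaussian P (9 / 2 * kappa ^+ 2 * nu) (fun w => X w * Y w).
Proof.
move=> nu0 k0 [X1 [Y1 [XY1 cov0]]] [[mX [_ EX0]] Hmgf] Yb.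
have mY : measurable_fun setT Y by [].
have mZ : measurable_fun setT (fun w => X w * Y w) by exact: measurable_funM.
have EZ : ('E_P[(fun w => X w * Y w)%R] = 0)%E.
  rewrite covarianceE // EX0 mul0e sube0 in cov0; exact: cov0.
split; first by split; [exact: mZ | split; [exact: XY1 | exact: EZ]].
move=> l.
set c := 2 * kappa * l.
have mcX : forall k, measurable_fun setT (fun w => expR (k * X w)).
  move=> k; apply: measurableT_comp => //; apply: measurable_funM => //.
have A1 : (fun w => expR (c * X w)) \in Lfun P 1.
  apply: (@Lfun_of_bound _ _ _ P _ (expR (c ^+ 2 * nu / 2))) => //.
have B1 : (fun w => expR ((- c) * X w)) \in Lfun P 1.
  apply: (@Lfun_of_bound _ _ _ P _ (expR ((- c) ^+ 2 * nu / 2))) => //.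
pose C := fun w => (expR (2 * (l * (X w * Y w))) + expR (- (2 * (l * (X w * Y w))))) / 2.
have mC : measurable_fun setT C.
  apply: measurable_funM => //; apply: measurable_funD.
    apply: measurableT_comp => //; apply: measurable_funM => //; apply: measurable_funM => //.
  apply: measurableT_comp => //; apply: measurableT_comp => //.
  apply: measurable_funM => //; apply: measurable_funM => //.
have C0 : forall w, 0 <= C w.
  move=> w; rewrite /C; apply: divr_ge0 => //; apply: addr_ge0; exact/ltW/expR_gt0.
have EAB : ('E_P[(2^-1 \o* ((fun w => expR (c * X w)) \+ (fun w => expR ((- c) * X w))))%R]
     = (2^-1)%:E * ('E_P[fun w => expR (c * X w)] + 'E_P[fun w => expR ((- c) * X w)]))%E.
  by rewrite expectationZl ?expectationD // rpredD.
have hC : ('E_P[C] <= 'E_P[(2^-1 \o* ((fun w => expR (c * X w)) \+ (fun w => expR ((- c) * X w))))%R])%E.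
  apply: expectation_le => //.
  - apply: measurable_funM => //; apply: measurable_funD => //.
  - move=> w /=; apply: mulr_ge0 => //; apply: addr_ge0; exact/ltW/expR_gt0.
  apply: filterS Yb => w Yw.
  rewrite /C /=; apply: ler_wpM2r => //.
  rewrite mulNr; apply: cosh_mono.
  rewrite /c !normrM (ger0_norm (ltW k0)).
  have := normr_ge0 (X w); have := normr_ge0 l; have := normr_ge0 (Y w).
  have : `|2| = 2 :> R by rewrite ger0_norm.
  move=> -> _ _ _; have := mulr_ge0 (normr_ge0 l) (normr_ge0 (X w)); nra.
have C1 : C \in Lfun P 1.
  move: (Hmgf c) (Hmgf (- c)).
  have := expectation_fin_num A1; have := expectation_fin_num B1.
  move: hC; rewrite EAB.
  case: ('E_P[fun w => expR (c * X w)])%E => // a.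
  case: ('E_P[fun w => expR ((- c) * X w)])%E => // b.
  move=> hC _ _ _ _.
  by apply: (@Lfun_of_bound _ _ _ P _ (2^-1 * (a + b))).
have hZ : ('E_P[fun w => expR (l * (X w * Y w))] <=
    'E_P[(C \+ l \o* (fun w => X w * Y w))%R])%E.
  apply: expectation_le => //.
  - apply: measurableT_comp => //; apply: measurable_funM => //.
  - apply: measurable_funD => //; apply: measurable_funM => //.
  - move=> w /=.
    have := @cosh_bound R (l * (X w * Y w)); have := expR_gt0 (l * (X w * Y w)).
    rewrite /C; lra.
  apply: aeW => w /=.
  have := @cosh_bound R (l * (X w * Y w)); rewrite /C; lra.
have LZ : (l \o* (fun w => X w * Y w))%R \in Lfun P 1 by apply: Lfun_scale.
rewrite (expectationD C1 LZ) (expectationZl _ XY1) EZ mule0 adde0 in hZ.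
apply: (le_trans hZ); apply: (le_trans hC); rewrite EAB.
move: (Hmgf c) (Hmgf (- c)).
have := expectation_fin_num A1; have := expectation_fin_num B1.
case: ('E_P[fun w => expR (c * X w)])%E => // a.
case: ('E_P[fun w => expR ((- c) * X w)])%E => // b.
rewrite !lee_fin => _ _ ha hb.
rewrite sqrrN in hb.
apply: (le_trans (y := expR (c ^+ 2 * nu / 2))); first lra.
rewrite ler_expR /c.
have : 0 <= kappa ^+ 2 * l ^+ 2 * nu.
  by apply: mulr_ge0; [apply: mulr_ge0; apply: sqr_ge0 | exact: ltW].
rewrite !expr2; nra.
Qed.
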